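(* Let $n\ge 1$, let $x_1<x_2<\dots<x_n$ be real numbers, and let $t_0,t_1,\dots,t_n:\mathbb{R}\to\mathbb{R}$ be functions. Define the piecewise function $$t(x)=\begin{cases} t_0(x), & x<x_1,\\ t_i(x), & x_i\le x<x_{i+1}\ (1\le i\le n-1),\\ t_n(x), & x_n\le x.\end{cases}$$ Define $H_1:\mathbb{R}\to\mathbb{R}$ by $$H_1(x)=1+\int_0^{\pi/2}\left(\frac{x\sec^2 s\, e^{-x\tan s}}{\left(1+e^{-x\tan s}\right)^2}-\frac12 e^{-x^2\tan s}x^2\sec^2 s\right)ds$$ (an improper Riemann integral at $s=\pi/2$), and for $a<b$ put $I(x,a,b)=H_1(x-a)-H_1(x-b)$. Then for every real $x$, $$t(x)=\bigl(1-H_1(x-x_1)\bigr)t_0(x)+\sum_{i=1}^{n-1}I(x,x_i,x_{i+1})\,t_i(x)+H_1(x-x_n)\,t_n(x).$$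
   Context: The paper calls this ''representation of a piecewise-defined function in analytic form without approximation'', assuming each $t_i$ itself has such a form. *)

(* Defs.v *)
From Stdlib Require Import Reals.
From Coquelicot Require Import Coquelicot.
Open Scope R_scope.

Definition H1_integrand (x s : R) : R :=
  x * (1 / (cos s) ^ 2) * exp (- x * tan s) / (1 + exp (- x * tan s)) ^ 2
  - / 2 * exp (- x ^ 2 * tan s) * x ^ 2 * (1 / (cos s) ^ 2).

Definition H1 (x : R) : R :=
  1 + RInt_gen (H1_integrand x) (at_point 0) (at_left (PI / 2)).

Definition Iab (x a b : R) : R := H1 (x - a) - H1 (x - b).

(* Main.v *)
From Stdlib Require Import Reals Lra Lia Psatz.
From Coquelicot Require Import Coquelicot.
Require Import Defs.
Open Scope R_scope.

Definition Gf (x u : R) : R := / (1 + exp (- x * u)) + / 2 * exp (- x ^ 2 * u).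
Definition Fh (x s : R) : R := Gf x (tan s).

Lemma cos_pos_in s : - PI / 2 < s < PI / 2 -> 0 < cos s.
Proof. intros [H1 H2]. apply cos_gt_0; lra. Qed.

Lemma deriv_Fh x s : - PI / 2 < s < PI / 2 -> is_derive (Fh x) s (H1_integrand x s).
Proof.
  intros Hs. pose proof (cos_pos_in s Hs) as Hc.
  unfold Fh, Gf, H1_integrand, tan.
  assert (Hp : forall z, 0 < 1 + exp z) by (intro z; pose proof (exp_pos z); lra).
  auto_derive.
  - repeat split; try lra; try (apply Rgt_not_eq, Hp || apply Rgt_not_eq; lra);
      apply Rgt_not_eq, Hp.
  - assert (K : 1 * cos s * / cos s + sin s * (- (1 * - sin s) * / (cos s * cos s)) = 1 / cos s ^ 2).
    { pose proof (sin2_cos2 s) as S. unfold Rsqr in S.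
      field_simplify; try lra. f_equal. nra. }
    rewrite K. replace (x * (x * 1)) with (x ^ 2) by ring. unfold Rdiv.
    set (E1 := exp (- x * (sin s * / cos s))). set (E2 := exp (- x ^ 2 * (sin s * / cos s))).
    field. split; [lra|]. apply Rgt_not_eq, Hp.
Qed.

Lemma cont_int x s : - PI / 2 < s < PI / 2 -> continuous (H1_integrand x) s.
Proof.
  intros Hs. pose proof (cos_pos_in s Hs) as Hc.
  apply (@ex_derive_continuous R_AbsRing R_NormedModule).
  unfold H1_integrand, tan.
  assert (Hp : forall z, 0 < 1 + exp z) by (intro z; pose proof (exp_pos z); lra).
  auto_derive.
  repeat split; try lra; try (apply Rgt_not_eq; lra); try (apply Rgt_not_eq, Hp);
   try (apply pow_nonzero; lra); try (apply Rgt_not_eq, pow_lt, Hp).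
  all: rewrite Rmult_1_r; apply Rmult_integral_contrapositive_currified;
    try (apply Rgt_not_eq; lra); apply Rgt_not_eq, Hp.
Qed.

Lemma Fh0 x : Fh x 0 = 1.
Proof. unfold Fh, Gf. rewrite tan_0, !Rmult_0_r, exp_0. field. Qed.

Lemma piece x b : 0 <= b < PI / 2 -> is_RInt (H1_integrand x) 0 b (Fh x b - Fh x 0).
Proof.
  intros Hb. pose proof PI_RGT_0.
  apply (is_RInt_derive (Fh x) (H1_integrand x) 0 b).
  - intros s Hs. rewrite Rmin_left, Rmax_right in Hs by lra. apply deriv_Fh. lra.
  - intros s Hs. rewrite Rmin_left, Rmax_right in Hs by lra. apply cont_int. lra.
Qed.

Lemma exp_small a eps : 0 < a -> 0 < eps -> exists M, forall u, M < u -> exp (- a * u) < eps.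
Proof.
  intros Ha He. exists (/ (a * eps)). intros u Hu.
  assert (Hae : 0 < a * eps) by nra.
  assert (Hu0 : 0 < u) by (pose proof (Rinv_0_lt_compat _ Hae); lra).
  assert (H1 : 1 + a * u < exp (a * u)) by (apply exp_ineq1; nra).
  assert (H2 : 1 < a * u * eps).
  { apply Rmult_lt_compat_r with (r := a * eps) in Hu; [|lra].
    rewrite Rinv_l in Hu by lra. nra. }
  replace (- a * u) with (- (a * u)) by ring. rewrite exp_Ropp.
  pose proof (exp_pos (a * u)).
  apply Rmult_lt_reg_r with (exp (a * u)); [lra|].
  rewrite Rinv_l by lra. nra.
Qed.

Definition cH (x : R) : R := if Rle_dec 0 x then 1 else 0.

Lemma ball_R (c e y : R) : Rabs (y - c) < e -> ball c e y.
Proof. intros H. exact H. Qed.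

Lemma Gf_lim x : filterlim (Gf x) (Rbar_locally p_infty) (locally (cH x)).
Proof.
  apply filterlim_locally. intros eps. pose proof (cond_pos eps) as He.
  simpl.
  unfold cH. destruct (Rle_dec 0 x) as [Hx|Hx].
  - destruct (Req_dec x 0) as [H0|H0].
    + subst x. exists 0. intros u _. apply ball_R. unfold Gf.
      replace (- 0 * u) with 0 by ring. replace (- 0 ^ 2 * u) with 0 by ring.
      rewrite exp_0. replace (/ (1 + 1) + / 2 * 1 - 1) with 0 by field.
      rewrite Rabs_R0. lra.
    + assert (Hx' : 0 < x) by lra.
      destruct (exp_small x (eps / 2) Hx') as [M1 HM1]; [lra|].
      destruct (exp_small (x ^ 2) eps) as [M2 HM2]; [nra|lra|].
      exists (Rmax M1 M2). intros u Hu. apply ball_R. unfold Gf.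
      specialize (HM1 u (Rle_lt_trans _ _ _ (Rmax_l _ _) Hu)).
      specialize (HM2 u (Rle_lt_trans _ _ _ (Rmax_r _ _) Hu)).
      set (e1 := exp (- x * u)) in *. set (e2 := exp (- x ^ 2 * u)) in *.
      assert (P1 : 0 < e1) by apply exp_pos. assert (P2 : 0 < e2) by apply exp_pos.
      set (q := / (1 + e1)).
      assert (Q1 : q * (1 + e1) = 1) by (unfold q; field; lra).
      assert (Q2 : 0 < q) by (unfold q; apply Rinv_0_lt_compat; lra).
      assert (Q3 : q < 1) by nra.
      assert (Q4 : 1 - e1 <= q) by nra.
      apply Rabs_def1; lra.
  - assert (Hx' : 0 < - x) by lra.
    destruct (exp_small (- x) (eps / 2) Hx') as [M1 HM1]; [lra|].
    destruct (exp_small (x ^ 2) eps) as [M2 HM2]; [nra|lra|].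
    exists (Rmax M1 M2). intros u Hu. apply ball_R. unfold Gf.
    specialize (HM1 u (Rle_lt_trans _ _ _ (Rmax_l _ _) Hu)).
    specialize (HM2 u (Rle_lt_trans _ _ _ (Rmax_r _ _) Hu)).
    rewrite Ropp_involutive in HM1.
    set (d := exp (x * u)) in *. set (E := exp (- x * u)). set (e2 := exp (- x ^ 2 * u)) in *.
    assert (Ed : E * d = 1).
    { unfold E, d. rewrite <- exp_plus. replace (- x * u + x * u) with 0 by ring. apply exp_0. }
    assert (P1 : 0 < E) by apply exp_pos. assert (P2 : 0 < e2) by apply exp_pos.
    assert (P3 : 0 < d) by apply exp_pos.
    set (q := / (1 + E)).
    assert (Q1 : q * (1 + E) = 1) by (unfold q; field; lra).
    assert (Q2 : 0 < q) by (unfold q; apply Rinv_0_lt_compat; lra).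
    assert (Q3 : q * E < 1) by nra.
    assert (Q4 : q < d) by nra.
    apply Rabs_def1; lra.
Qed.

Lemma tan_lim : filterlim tan (at_left (PI / 2)) (Rbar_locally p_infty).
Proof.
  intros P [M HM]. unfold filtermap, at_left, within, locally.
  pose proof (atan_bound M) as [Ha1 Ha2].
  assert (Hd : 0 < PI / 2 - atan M) by lra.
  exists (mkposreal _ Hd). intros y Hy Hy2. apply HM.
  change (Rabs (y - PI / 2) < PI / 2 - atan M) in Hy.
  apply Rabs_def2 in Hy. destruct Hy as [Hy3 Hy4].
  rewrite <- (tan_atan M) at 1. apply tan_increasing; lra.
Qed.

Lemma Fh_lim x : filterlim (Fh x) (at_left (PI / 2)) (locally (cH x)).
Proof.
  exact (filterlim_comp _ _ _ tan (Gf x) _ _ _ tan_lim (Gf_lim x)).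
Qed.

Lemma H1_val x : H1 x = cH x.
Proof.
  unfold H1.
  rewrite (@is_RInt_gen_unique R_CompleteNormedModule (at_point 0) (at_left (PI / 2))
             (Proper_StrongProper _ (at_point_filter 0))
             (Proper_StrongProper _ (at_left_proper_filter _)) _ (cH x - 1)).
  { ring. }
  pose proof PI_RGT_0.
  apply (filterlimi_lim_ext_loc (fun ab => Fh x (snd ab) - Fh x (fst ab))).
  - apply (Filter_prod _ _ _ (fun a => a = 0) (fun b => 0 < b < PI / 2)).
    + reflexivity.
    + assert (Hd : 0 < PI / 2) by lra. exists (mkposreal _ Hd). intros y Hy Hy2.
      change (Rabs (y - PI / 2) < PI / 2) in Hy. apply Rabs_def2 in Hy. simpl. lra.
    + intros a b -> Hb. simpl. apply piece. lra.
  - apply filterlim_locally. intros eps.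
    pose proof (proj1 (filterlim_locally _ _) (Fh_lim x) eps) as HF.
    apply (Filter_prod (at_point 0) (at_left (PI / 2)) _ (fun a => a = 0) _ eq_refl HF).
    intros a b -> Hb. simpl. rewrite Fh0.
    change (Rabs (Fh x b - cH x) < eps) in Hb.
    change (Rabs (Fh x b - 1 - (cH x - 1)) < eps).
    replace (Fh x b - 1 - (cH x - 1)) with (Fh x b - cH x) by ring. exact Hb.
Qed.

Lemma H1_ge y a : a <= y -> H1 (y - a) = 1.
Proof. intros H. rewrite H1_val. unfold cH. destruct (Rle_dec 0 (y - a)); lra. Qed.
Lemma H1_lt y a : y < a -> H1 (y - a) = 0.
Proof. intros H. rewrite H1_val. unfold cH. destruct (Rle_dec 0 (y - a)); lra. Qed.

Lemma mono (n : nat) (xs : nat -> R) :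
  (forall i : nat, (1 <= i)%nat -> (i < n)%nat -> xs i < xs (S i)) ->
  forall i j, (1 <= i)%nat -> (i <= j)%nat -> (j <= n)%nat -> xs i <= xs j.
Proof.
  intros Hinc i j Hi Hij Hj. induction j as [|j IH].
  - lia.
  - destruct (Nat.eq_dec i (S j)) as [->|Hne]; [lra|].
    assert (xs i <= xs j) by (apply IH; lia).
    assert (xs j < xs (S j)) by (apply Hinc; lia). lra.
Qed.

Lemma find_i (n : nat) (xs : nat -> R) (y : R) :
  forall m, (1 <= m)%nat -> xs 1%nat <= y -> y < xs m ->
  exists i, (1 <= i)%nat /\ (i < m)%nat /\ xs i <= y < xs (S i).
Proof.
  induction m as [|m IH]; intros Hm H1 H2; [lia|].
  destruct (Nat.eq_dec m 0) as [->|Hm0]; [lra|].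
  destruct (Rle_dec (xs m) y) as [Hle|Hlt].
  - exists m. repeat split; try lia; lra.
  - destruct IH as [i Hi]; [lia|lra|lra|]. exists i. repeat split; try lia; tauto.
Qed.

Theorem theorem1 (n : nat) (xs : nat -> R) (ts : nat -> R -> R) (t : R -> R) :
  (1 <= n)%nat ->
  (forall i : nat, (1 <= i)%nat -> (i < n)%nat -> xs i < xs (S i)) ->
  (forall y : R, y < xs 1%nat -> t y = ts 0%nat y) ->
  (forall (i : nat) (y : R), (1 <= i)%nat -> (i <= n - 1)%nat ->
      xs i <= y < xs (S i) -> t y = ts i y) ->
  (forall y : R, xs n <= y -> t y = ts n y) ->
  forall y : R,
    t y = (1 - H1 (y - xs 1%nat)) * ts 0%nat y
          + sum_n_m (fun i => Iab y (xs i) (xs (S i)) * ts i y) 1 (n - 1)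
          + H1 (y - xs n) * ts n y.
Proof.
  intros Hn Hinc H0 Hmid Hlast y.
  pose proof (mono n xs Hinc) as Mo.
  destruct (Rlt_dec y (xs 1%nat)) as [Ha|Ha].
  - rewrite (H0 y Ha), H1_lt, (H1_lt y (xs n)) by (try lra; assert (xs 1%nat <= xs n) by (apply Mo; lia); lra).
    rewrite (sum_n_m_ext_loc _ (fun _ => zero)), sum_n_m_const_zero.
    + change (zero : R_AbelianMonoid) with 0. ring.
    + intros k Hk. unfold Iab. rewrite !H1_lt by (assert (xs 1%nat <= xs (S k)) by (apply Mo; lia); assert (xs 1%nat <= xs k) by (apply Mo; lia); lra). apply (@eq_trans R _ 0 _); [ring|reflexivity].
  - destruct (Rle_dec (xs n) y) as [Hb|Hb].
    + rewrite (Hlast y Hb), H1_ge, (H1_ge y (xs n)) by (try lra; assert (xs 1%nat <= xs n) by (apply Mo; lia); lra).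
      rewrite (sum_n_m_ext_loc _ (fun _ => zero)), sum_n_m_const_zero.
      * change (zero : R_AbelianMonoid) with 0. ring.
      * intros k Hk. unfold Iab. rewrite !H1_ge by (assert (xs (S k) <= xs n) by (apply Mo; lia); assert (xs k <= xs n) by (apply Mo; lia); lra). apply (@eq_trans R _ 0 _); [ring|reflexivity].
    + destruct (find_i n xs y n Hn ltac:(lra) ltac:(lra)) as [i [Hi1 [Hi2 [Hy1 Hy2]]]].
      rewrite (Hmid i y Hi1 ltac:(lia) (conj Hy1 Hy2)).
      rewrite (H1_ge y (xs 1%nat)) by lra.
      rewrite (H1_lt y (xs n)) by (pose proof (Mo (S i) n); lra).
      destruct i as [|j]; [lia|].
      rewrite (sum_n_m_Chasles _ 1 j (n - 1)) by lia.
      rewrite (sum_n_m_Chasles _ (S j) (S j) (n - 1)) by lia.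
      rewrite sum_n_n.
      rewrite (sum_n_m_ext_loc _ (fun _ => zero) 1 j), sum_n_m_const_zero.
      rewrite (sum_n_m_ext_loc _ (fun _ => zero) (S (S j))), sum_n_m_const_zero.
      * unfold Iab. rewrite H1_ge, H1_lt by lra.
        change (zero : R_AbelianMonoid) with 0. change (plus (G := R_AbelianMonoid)) with Rplus.
        simpl. ring.
      * intros k Hk. unfold Iab. rewrite !H1_lt by (assert (xs (S (S j)) <= xs (S k)) by (apply Mo; lia); assert (xs (S (S j)) <= xs k) by (apply Mo; lia); lra). apply (@eq_trans R _ 0 _); [ring|reflexivity].
      * intros k Hk. unfold Iab. rewrite !H1_ge by (assert (xs (S k) <= xs (S j)) by (apply Mo; lia); assert (xs k <= xs (S j)) by (apply Mo; lia); lra). apply (@eq_trans R _ 0 _); [ring|reflexivity].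
Qed.
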